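(* Assume Assumptions (LS) and (LT) below hold, and let $\rho$ and $G$ be the constants of Assumption (LS). There exist $C>0$, $\delta>0$ and $r_0$ such that for all $r>r_0$ and $|z|\le\rho r$, $$\mathbb{P}\left(X_r^z<\mu r-\frac{Gz^2}{r}-Cr^{1/3}\right)\ge\delta.$$
   Context: Let $\{\xi_v:v\in\mathbb{Z}^2\}$ be i.i.d. random variables with a common law $\nu$ supported on $[0,\infty)$. A directed path is an up-right nearest-neighbour path in $\mathbb{Z}^2$, and its weight is $\ell(\gamma)=\sum_{u\in\gamma}\xi_u$. For $u\preceq v$ coordinatewise, $X_{u,v}=\max_{\gamma:u\to v}\ell(\gamma)$ over directed paths from $u$ to $v$ ($-\infty$ if none). For $r\in\mathbb{N}$, $z\in\mathbb{Z}$, $X_r^z=X_{(1,1),(r-z,r+z)}$ and $X_r=X_r^0$. It is assumed that $\mu=\lim_{r\to\infty}r^{-1}\mathbb{E}[X_r]<\infty$. Assumption (LS): there exist positive finite constants $\rho,G,H,g_1,g_2$ such that for all large enough $r$ and all $z\in[-\rho r,\rho r]$, $\mathbb{E}[X_r^z]\in \mu r-G\frac{z^2}{r}+\left[-H\frac{z^4}{r^3},0\right]+\left[-g_1r^{1/3},-g_2r^{1/3}\right]$. Assumption (LT): there exists $\alpha>0$ such that for every $\varepsilon>0$ there exist positive finite $c,\theta_0,r_0$ (depending only on $\varepsilon$) such that for all $r>r_0$, $\theta>\theta_0$ and $|z|\le(1-\varepsilon)r$, $\mathbb{P}(X_r^z-\mathbb{E}[X_r^z]<-\theta r^{1/3})\le\exp(-c\theta^\alpha)$.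 *)

(* Defs.v *)
From HB Require Import structures.
From mathcomp Require Import all_boot all_order all_algebra.
From mathcomp Require Import all_classical all_reals all_analysis.
Set Implicit Arguments. Unset Strict Implicit. Unset Printing Implicit Defensive.
Import Order.TTheory GRing.Theory Num.Theory.
Import numFieldNormedType.Exports.
Local Open Scope classical_set_scope.
Local Open Scope ring_scope.

Definition vtx := (int * int)%type.

Definition step (p : vtx) (b : bool) : vtx :=
  if b then (p.1 + 1, p.2) else (p.1, p.2 + 1).

Definition path_vertices (u : vtx) (s : seq bool) : seq vtx :=
  u :: scanl step u s.

Definition path_len (u v : vtx) : nat := (`|v.1 - u.1| + `|v.2 - u.2|)%N.

Definition path_weight (R : realType) (T : Type) (xi : vtx -> T -> R)
  (u : vtx) (s : seq bool) (w : T) : R :=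
  \sum_(x <- path_vertices u s) xi x w.

(* X_{u,v}: maximum weight over directed paths u -> v (-oo if there is none).
   Every directed path from u to v has exactly path_len u v steps, so the
   directed paths u -> v are exactly the step sequences of that length whose
   last vertex is v. *)
Definition LPP (R : realType) (T : Type) (xi : vtx -> T -> R)
  (u v : vtx) (w : T) : \bar R :=
  \big[Order.max/-oo%E]_(s : (path_len u v).-tuple bool
        | last u (scanl step u s) == v) (path_weight xi u s w)%:E.

Definition Xrz (R : realType) (T : Type) (xi : vtx -> T -> R)
  (r : nat) (z : int) (w : T) : \bar R :=
  LPP xi (1, 1) (r%:Z - z, r%:Z + z) w.

Definition Eexp (d : measure_display) (T : measurableType d) (R : realType)
  (P : probability T R) (X : T -> \bar R) : \bar R :=
  (\int[P]_w X w)%E.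

Definition iid_nonneg (d : measure_display) (T : measurableType d)
  (R : realType) (P : probability T R) (xi : vtx -> T -> R) : Prop :=
  [/\ (forall v, measurable_fun setT (xi v)),
      (forall (F : seq vtx) (B : vtx -> set R), uniq F ->
         (forall i, measurable (B i)) ->
         P (\bigcap_(i in [set` F]) (xi i @^-1` B i)) =
         (\prod_(i <- F) P (xi i @^-1` B i))%E),
      (forall u v (B : set R), measurable B ->
         P (xi u @^-1` B) = P (xi v @^-1` B)) &
      (forall v, P [set w | 0 <= xi v w] = 1%E)].

Definition mu_limit (d : measure_display) (T : measurableType d)
  (R : realType) (P : probability T R) (xi : vtx -> T -> R) (mu : R) : Prop :=
  ((fun r : nat => (Eexp P (Xrz xi r 0) * ((r%:R : R)^-1)%:E)%E)
     @ \oo --> mu%:E).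

Definition assumption_LS (d : measure_display) (T : measurableType d)
  (R : realType) (P : probability T R) (xi : vtx -> T -> R) (mu : R)
  (rho G H g1 g2 : R) : Prop :=
  [/\ 0 < rho, 0 < G, 0 < H, 0 < g1 /\ 0 < g2 &
    exists r1 : R, forall r : nat, r1 < r%:R -> forall z : int,
      `|z%:~R| <= rho * r%:R ->
      exists a b : R,
        [/\ - H * (z%:~R) ^+ 4 / (r%:R) ^+ 3 <= a <= 0,
            - g1 * (r%:R) `^ (3^-1) <= b <= - g2 * (r%:R) `^ (3^-1) &
            Eexp P (Xrz xi r z) =
              (mu * r%:R - G * (z%:~R) ^+ 2 / r%:R + a + b)%:E]].

Definition assumption_LT (d : measure_display) (T : measurableType d)
  (R : realType) (P : probability T R) (xi : vtx -> T -> R) : Prop :=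
  exists alpha : R, 0 < alpha /\
   forall eps : R, 0 < eps ->
    exists c theta0 r0 : R, [/\ 0 < c, 0 < theta0, 0 < r0 &
      forall r : nat, r0 < r%:R -> forall theta : R, theta0 < theta ->
      forall z : int, `|z%:~R| <= (1 - eps) * r%:R ->
        (P [set w | (Xrz xi r z w - Eexp P (Xrz xi r z)
                     < (- (theta * (r%:R) `^ (3^-1)))%:E)%E]
        <= (expR (- (c * theta `^ alpha)))%:E)%E].

(* Main.v *)
Require Import Defs.
From HB Require Import structures.
From mathcomp Require Import all_boot all_order all_algebra.
From mathcomp Require Import all_classical all_reals all_analysis.
From mathcomp Require Import measurable_realfun.
From mathcomp Require Import lra ring.
Import Order.TTheory GRing.Theory Num.Theory.
Import numFieldNormedType.Exports.
Local Open Scope classical_set_scope.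
Local Open Scope ring_scope.

Lemma last_fst (s : seq bool) (u : vtx) : (u.1 <= (last u (scanl step u s)).1)%R.
Proof.
elim: s u => [|b s IH] u /=; first by [].
apply: le_trans (IH (step u b)).
by case: b; rewrite /step /= ?lerDl.
Qed.

Lemma tele (R : realType) (a : R) n : 1 < a ->
  \sum_(k < n) (1 / (a + k%:R) ^+ 2) <= 1 / (a - 1) - 1 / (a + n%:R - 1).
Proof.
move=> a1; elim: n => [|n IH]; first by rewrite big_ord0 addr0 subrr.
rewrite big_ord_recr /=; apply: le_trans (lerD IH (lexx _)) _.
have h0 := ler0n R n.
rewrite -[n.+1]addn1 natrD.
set y := a + n%:R.
have h1 : 1 < y by rewrite /y; lra.
have -> : a + (n%:R + 1) - 1 = y by rewrite /y; ring.
have e : 1 / (y - 1) - 1 / y - 1 / y ^+ 2 = 1 / (y ^+ 2 * (y - 1)).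
  by field; rewrite !gt_eqF //; lra.
have : 0 <= 1 / (y ^+ 2 * (y - 1)).
  by apply: divr_ge0 => //; apply: mulr_ge0; [exact: sqr_ge0|lra].
rewrite -e; lra.
Qed.

Lemma expbound (R : realType) (alpha c : R) : 0 < alpha -> 0 < c ->
  exists K : R, 0 < K /\ forall x : R, 1 <= x ->
    expR (- (c * x `^ alpha)) <= K / x ^+ 2.
Proof.
move=> a0 c0.
set N := (Num.truncn (2 / alpha)).+1.
have hN : 2 <= alpha * N%:R.
  have := truncnS_gt (2 / alpha); rewrite -/N => h.
  have e : alpha * (2 / alpha) = 2 by field; rewrite gt_eqF.
  by rewrite -{1}e; apply: ler_wpM2l; [lra| apply: ltW].
have cN : 0 < c ^+ N by apply: exprn_gt0.
have fN : 0 < N`!%:R :> R by rewrite ltr0n fact_gt0.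
exists (N`!%:R / c ^+ N); split; first by apply: divr_gt0.
move=> x x1.
have x0 : 0 < x by lra.
set y := c * x `^ alpha.
have y0 : 0 <= y by apply: mulr_ge0; [lra| exact: powR_ge0].
have E : c ^+ N * x ^+ 2 / N`!%:R <= expR y.
  have := expR_ge1Dxn (Num.truncn (2 / alpha)) y0; rewrite -/N => h.
  apply: le_trans h; apply: (@le_trans _ _ (y ^+ N / N`!%:R)); last by rewrite lerDr.
  rewrite ler_pM2r ?invr_gt0 // /y exprMn ler_pM2l //.
  rewrite -[(x `^ alpha) ^+ N]powR_mulrn ?powR_ge0 // -powRrM.
  rewrite -[x ^+ 2]powR_mulrn; last lra.
  by apply: ler_powR.
rewrite expRN.
have p1 : 0 < c ^+ N * x ^+ 2 / N`!%:R.
  by apply: divr_gt0 => //; apply: mulr_gt0 => //; apply: exprn_gt0.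
apply: le_trans (_ : (c ^+ N * x ^+ 2 / N`!%:R)^-1 <= _).
  by rewrite lef_pV2 // posrE // expR_gt0.
by rewrite invf_div invfM mulrA.
Qed.

Lemma series_bound (R : realType) (u : nat -> \bar R) (K th : R) :
  1 < th -> 0 < K -> (forall k, 0 <= u k)%E ->
  (forall k, u k <= (K / (th + k%:R) ^+ 2)%:E)%E ->
  (\sum_(k <oo) u k <= (K / (th - 1))%:E)%E.
Proof.
move=> th1 K0 u0 hu.
apply: le_trans (lee_nneseries (v := fun k => (K / (th + k%:R) ^+ 2)%:E) _ _) _.
- by move=> i _ _; exact: u0.
- by move=> n _; exact: hu.
apply: lime_le.
  apply: is_cvg_nneseries => n _ _; rewrite lee_fin; apply: divr_ge0; first lra.
  exact: sqr_ge0.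
apply: nearW => n /=.
rewrite sumEFin lee_fin big_mkord.
have := @tele R th n th1.
have h0 : 0 <= 1 / (th + n%:R - 1).
  by apply: divr_ge0 => //; have := ler0n R n; lra.
move=> h.
have -> : \sum_(i < n) K / (th + i%:R) ^+ 2 = K * \sum_(i < n) (1 / (th + i%:R) ^+ 2).
  by rewrite mulr_sumr; apply: eq_bigr => i _; rewrite mulrA mulr1.
rewrite ler_pM2l //; lra.
Qed.

Lemma meas_lt d (T : measurableType d) (R : realType) (f : T -> R) (x : R) :
  measurable_fun setT f -> measurable [set w | f w < x].
Proof.
move=> mf.
rewrite (_ : [set w | f w < x] = setT `&` f @^-1` `]-oo, x[).
  exact: mf measurableT _ (measurable_itv _).
by apply/seteqP; split => w /=; rewrite in_itv /= => //; case.
Qed.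

Lemma int_fin d (T : measurableType d) (R : realType) (P : probability T R)
  (f : T -> R) (m : R) :
  measurable_fun setT f -> (\int[P]_w (f w)%:E = m%:E)%E ->
  P.-integrable setT (EFin \o f).
Proof.
move=> mf hi.
have mF : measurable_fun setT (EFin \o f : T -> \bar R) by exact/measurable_EFinP.
apply/integrableP; split => //.
have := hi; rewrite integralE => h.
have : (\int[P]_(x in setT) (EFin \o f)^\+ x - \int[P]_(x in setT) (EFin \o f)^\- x)%E
   \is a fin_num by rewrite h.
rewrite fin_numB => /andP[h1 h2].
rewrite (_ : (fun x => `|(f x)%:E|)%E = (fun x => (EFin \o f)^\+ x + (EFin \o f)^\- x)%E); last first.
  by apply/funext => x; have := congr1 (fun g => g x) (fune_abse (EFin \o f)).
rewrite ge0_integralD //; last 2 first.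
- exact: measurable_funepos.
- exact: measurable_funeneg.
by rewrite ltey_eq fin_numD h1 h2.
Qed.

Lemma maxdec (R : realType) (x : R) : Order.max x 0 - Order.max (- x) 0 = x.
Proof.
have [h|h] := leP x 0.
  by rewrite max_l ?oppr_ge0 // sub0r opprK.
by rewrite max_r ?oppr_le0 ?(ltW h) // subr0.
Qed.

Lemma core d (T : measurableType d) (R : realType) (P : probability T R)
  (f : T -> R) (m s eps th S : R) :
  measurable_fun setT f -> (\int[P]_w (f w)%:E = m%:E)%E ->
  0 < s -> 0 < eps -> 0 <= th -> S <= eps / 2 ->
  (\sum_(k <oo) P [set w | (f w < m - (th + k%:R) * s)%R] <= S%:E)%E ->
  ((eps / (2 * (eps + th + 1)))%:E <= P [set w | (f w < m + eps * s)%R])%E.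
Proof.
move=> mf hi s0 e0 th0 hS hser.
have iF := @int_fin _ _ _ P f m mf hi.
set Ac := [set w | f w < m + eps * s].
have mAc : measurable Ac by exact: (@meas_lt _ _ _ f _ mf).
set B := fun k : nat => [set w | f w < m - (th + k%:R) * s].
have mB : forall k, measurable (B k) by move=> k; exact: (@meas_lt _ _ _ f _ mf).
set p := fine (P Ac).
have hp : P Ac = p%:E by rewrite /p fineK // fin_num_measure.
set q := fun w => Order.max (f w - m) 0.
set g := fun w => Order.max (m - f w) 0.
have mfm : measurable_fun setT (fun w => f w - m).
  exact: measurable_funB mf (measurable_cst _).
have mq : measurable_fun setT q := measurable_maxr mfm (measurable_cst _).
have mfm' : measurable_fun setT (fun w => m - f w).
  exact: measurable_funB (measurable_cst _) mf.
have mg : measurable_fun setT g := measurable_maxr mfm' (measurable_cst _).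
have ifm : P.-integrable setT ((EFin \o f) \- (EFin \o cst m))%E.
  exact: (integrableB measurableT iF (finite_measure_integrable_cst _ m measurableT)).
have iq : P.-integrable setT (EFin \o q).
  apply: le_integrable ifm => //; first exact/measurable_EFinP.
  move=> w _ /=; rewrite lee_fin /q.
  by have [h|h] := leP (f w - m) 0; rewrite ?normr0.
have ig : P.-integrable setT (EFin \o g).
  apply: le_integrable ifm => //; first exact/measurable_EFinP.
  move=> w _ /=; rewrite lee_fin /g distrC.
  by have [h|h] := leP (m - f w) 0; rewrite ?normr0.
have eqqg : (\int[P]_w (q w)%:E = \int[P]_w (g w)%:E)%E.
  have e1 : (\int[P]_w ((q w)%:E - (g w)%:E) = 0)%E.
    transitivity (\int[P]_w ((f w)%:E - (cst m w)%:E))%E.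
      apply: eq_integral => w _; rewrite -!EFinB /q /g; congr EFin.
      by rewrite -[m - f w]opprB maxdec.
    rewrite integralB_EFin //; last exact: finite_measure_integrable_cst.
    rewrite hi (_ : (fun x => (cst m x)%:E) = cst m%:E) // integral_cst //.
    set z := (X in (m%:E * X)%E); have -> : z = 1%E by exact: probability_setT.
    by rewrite mule1 subee.
  rewrite integralB_EFin // in e1.
  have fq := integrable_fin_num measurableT iq.
  have fg := integrable_fin_num measurableT ig.
  move: e1 fq fg; rewrite /comp.
  move: (\int[P]_w (q w)%:E)%E (\int[P]_w (g w)%:E)%E => [a| |] [b| |] //= e _ _.
  by move: e; rewrite -EFinB => -[] /eqP; rewrite subr_eq0 => /eqP ->.
have mCA : measurable (~` Ac) by exact: measurableC.
have es0 : 0 < eps * s by apply: mulr_gt0.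
have low : (((eps * s) * (1 - p))%:E <= \int[P]_w (q w)%:E)%E.
  apply: le_trans (_ : _ <= \int[P]_w ((eps * s) * \1_(~` Ac) w)%:E)%E _.
    rewrite (@integralZl_indic _ _ _ P setT measurableT (fun _ => ~` Ac) (eps * s)) //; last first.
      by move=> h; move: (lt_trans es0 h); rewrite ltxx.
    have hC : (P : {measure set T -> \bar R}) (~` Ac) = (1 - p%:E)%E.
      by transitivity (1 - P Ac)%E; [exact: probability_setC | rewrite hp].
    by rewrite integral_indic // setIT hC EFinM EFinB.
  apply: ge0_le_integral => //.
  - by move=> w _; rewrite lee_fin; apply: mulr_ge0; [lra|rewrite indicE; case: (w \in _)].
  - apply/measurable_EFinP; apply: measurable_funM; first exact: measurable_cst.
    exact: measurable_indic.
  - exact/measurable_EFinP.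
  move=> w _; rewrite lee_fin indicE /q.
  have [hw|hw] := boolP (w \in ~` Ac).
    rewrite mulr1; move/set_mem: hw; rewrite /Ac /= => /negP; rewrite -leNgt => hw.
    by rewrite le_max; apply/orP; left; lra.
  by rewrite mulr0 le_max lexx orbT.
have hup : (\int[P]_w (g w)%:E <= ((s * (th + 1)) * p + s * S)%:E)%E.
  set F := fun (k : nat) (w : T) => (s * \1_(B k) w)%:E.
  have F0 : forall k w, (0 <= F k w)%E.
    by move=> k w; rewrite lee_fin; apply: mulr_ge0; [lra| rewrite indicE; case: (w \in _)].
  have mF : forall k, measurable_fun setT (F k).
    move=> k; apply/measurable_EFinP; apply: measurable_funM; first exact: measurable_cst.
    exact: measurable_indic.
  have c0 : 0 <= s * (th + 1) by apply: mulr_ge0; lra.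
  have G0 : forall w, (0 <= ((s * (th + 1)) * \1_Ac w)%:E)%E.
    by move=> w; rewrite lee_fin; apply: mulr_ge0 => //; rewrite indicE; case: (w \in _).
  have mG : measurable_fun setT (fun w => ((s * (th + 1)) * \1_Ac w)%:E).
    apply/measurable_EFinP; apply: measurable_funM; first exact: measurable_cst.
    exact: measurable_indic.
  have mS : measurable_fun setT (fun w => \sum_(k <oo) F k w)%E.
    exact: (ge0_emeasurable_sum (P := xpredT)).
  apply: le_trans (_ : _ <= \int[P]_w (((s * (th + 1)) * \1_Ac w)%:E + \sum_(k <oo) F k w))%E _.
    apply: ge0_le_integral => //.
    - by move=> w _; rewrite lee_fin /g le_max lexx orbT.
    - exact/measurable_EFinP.
    - exact: emeasurable_funD.
    move=> w _.
    have S0 : (0 <= \sum_(k <oo) F k w)%E by apply: nneseries_ge0 => k _ _; exact: F0.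
    rewrite /g indicE.
    have [hw|hw] := boolP (w \in Ac); last first.
      have hw' : m + eps * s <= f w.
        by rewrite leNgt; apply/negP => h; move/negP: hw; apply; exact: mem_set.
      rewrite mulr0 add0e.
      by rewrite max_r //; lra.
    rewrite mulr1; move/set_mem: hw => /= hw.
    have [h1|h1] := leP (m - f w) (s * (th + 1)).
      apply: le_trans (_ : _ <= (s * (th + 1))%:E + 0)%E _; last by apply: leeD.
      by rewrite adde0 lee_fin ge_max h1 c0.
    have x1 : 1 <= (m - f w) / s - th.
      have : th + 1 < (m - f w) / s by rewrite ltr_pdivlMr // mulrC.
      lra.
    set n := Num.truncn ((m - f w) / s - th).
    apply: le_trans (_ : _ <= (s * (th + 1))%:E + \sum_(0 <= k < n) F k w)%E _; last first.
      by apply: leeD => //; apply: nneseries_lim_ge => k _ _; exact: F0.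
    rewrite (@eq_big_nat _ _ _ 0 n _ (fun _ => s%:E)); last first.
      move=> k /andP[_ hk]; rewrite /F indicE mem_set ?mulr1 //= /B /=.
      have hn : (n%:R <= (m - f w) / s - th) by rewrite truncn_le; lra.
      have hk' : (k.+1%:R <= n%:R :> R) by rewrite ler_nat.
      have : (th + k.+1%:R) * s <= m - f w by rewrite -ler_pdivlMr //; lra.
      rewrite -addn1 natrD; lra.
    rewrite sumEFin sumr_const_nat subn0 -EFinD lee_fin max_l; last lra.
    have := truncnS_gt ((m - f w) / s - th); rewrite -/n => hn.
    have : (m - f w) / s < th + n.+1%:R by lra.
    rewrite ltr_pdivrMr // -addn1 natrD -mulr_natr => h2.
    lra.
  rewrite ge0_integralD //; last by move=> x _; apply: nneseries_ge0 => k _ _; exact: F0.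
  rewrite (@integralZl_indic _ _ _ P setT measurableT (fun _ => Ac) (s * (th + 1))) //; last first.
    by move=> h; exfalso; move: (le_lt_trans c0 h); rewrite ltxx.
  rewrite integral_indic // setIT integral_nneseries //.
  have eF : forall k, (\int[P]_w F k w = s%:E * P (B k))%E.
    move=> k; rewrite (@integralZl_indic _ _ _ P setT measurableT (fun _ => B k) s) //; last first.
      by move=> h; exfalso; move: (lt_trans s0 h); rewrite ltxx.
    by rewrite integral_indic // setIT.
  rewrite (eq_eseriesr (fun k _ => eF k)) nneseriesZl //.
  apply: (@le_trans _ _ ((s * (th + 1) * p)%:E + (s * S)%:E)%E); last by [].
  apply: leeD.
    have hpm : (P : {measure set T -> \bar R}) Ac = p%:E by exact: hp.
    by rewrite hpm -EFinM.
  rewrite EFinM; apply: lee_wpmul2l; first by rewrite lee_fin; lra.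
  exact: hser.

have key : eps * s * (1 - p) <= s * (th + 1) * p + s * S.
  by rewrite -lee_fin; apply: le_trans low _; rewrite eqqg; exact: hup.
rewrite hp lee_fin.
have h : eps * (1 - p) <= (th + 1) * p + S by rewrite -(ler_pM2l s0); lra.
rewrite ler_pdivrMr; lra.
Qed.

Lemma bigmax_meas d (T : measurableType d) (R : realType) (I : finType)
  (Pp : pred I) (F : I -> T -> \bar R) :
  (forall i, measurable_fun setT (F i)) ->
  measurable_fun setT (fun w => \big[Order.max/-oo%E]_(i | Pp i) F i w).
Proof.
move=> mF.
elim: (index_enum I) => [|i l IH].
  by under eq_fun do rewrite big_nil; exact: measurable_cst.
under eq_fun do rewrite big_cons.
by case: (Pp i) => //; exact: measurable_maxe.
Qed.

Lemma LPP_meas d (T : measurableType d) (R : realType) (xi : vtx -> T -> R) u v :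
  (forall v, measurable_fun setT (xi v)) -> measurable_fun setT (LPP xi u v).
Proof.
move=> mxi; rewrite /LPP; apply: bigmax_meas => s.
apply/measurable_EFinP; rewrite /path_weight.
exact: measurable_sum.
Qed.

Lemma LPP_fin d (T : measurableType d) (R : realType) (xi : vtx -> T -> R) u v :
  (exists s : (path_len u v).-tuple bool, last u (scanl step u s) == v) ->
  forall w, LPP xi u v w \is a fin_num.
Proof.
move=> [s0 hs0] w; rewrite fin_numElt; apply/andP; split.
  apply: lt_le_trans (@le_bigmax_cond _ _ _ -oo%E s0 (fun s : (path_len u v).-tuple bool => last u (scanl step u s) == v) (fun s : (path_len u v).-tuple bool => (path_weight xi u s w)%:E) hs0); exact: ltNyr.
by apply: bigmax_lt => // i _; exact: ltry.
Qed.

Lemma LPP_none d (T : measurableType d) (R : realType) (xi : vtx -> T -> R) u v :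
  (forall s : (path_len u v).-tuple bool, ~~ (last u (scanl step u s) == v)) ->
  forall w, LPP xi u v w = -oo%E.
Proof.
move=> h w; rewrite /LPP big_pred0 // => s; exact/negbTE/h.
Qed.

Lemma Eexp_none d (T : measurableType d) (R : realType) (P : probability T R)
  (xi : vtx -> T -> R) u v :
  (forall s : (path_len u v).-tuple bool, ~~ (last u (scanl step u s) == v)) ->
  Eexp P (LPP xi u v) = -oo%E.
Proof.
move=> h; rewrite /Eexp (_ : (fun w => LPP xi u v w) = cst -oo%E); last first.
  by apply/funext => w; rewrite (@LPP_none _ _ _ xi u v h).
rewrite integral_cst //.
set z := (X in (_ * X)%E); have -> : z = 1%E by exact: probability_setT.
by rewrite mule1.
Qed.

Lemma Eexp_fin d (T : measurableType d) (R : realType) (P : probability T R)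
  (xi : vtx -> T -> R) u v (m : R) :
  Eexp P (LPP xi u v) = m%:E -> forall w, LPP xi u v w = (fine (LPP xi u v w))%:E.
Proof.
move=> hE w; rewrite fineK //; apply: LPP_fin.
case: (boolP [exists s : (path_len u v).-tuple bool, last u (scanl step u s) == v]).
  by move/existsP.
move/existsPn => h; move: hE; rewrite (@Eexp_none _ _ _ P xi u v h); discriminate.
Qed.

Theorem lemma4p2 (d : measure_display) (T : measurableType d) (R : realType)
  (P : probability T R) (xi : vtx -> T -> R) (mu rho G : R) :
  iid_nonneg P xi ->
  mu_limit P xi mu ->
  (exists H g1 g2 : R, assumption_LS P xi mu rho G H g1 g2) ->
  assumption_LT P xi ->
  exists C delta r0 : R, [/\ 0 < C, 0 < delta &
    forall r : nat, r0 < r%:R -> forall z : int, `|z%:~R| <= rho * r%:R ->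
      (delta%:E <= P [set w | (Xrz xi r z w <
         (mu * r%:R - G * (z%:~R) ^+ 2 / r%:R - C * (r%:R) `^ (3^-1))%:E)%E])%E].
Proof.
move=> [mxi _ _ _] _ [H [g1 [g2 [rho0 G0 H0 [g10 g20] [r1 hr1]]]]] [alpha [a0 hLT]].
have [rho1|rho1] := leP 1 rho.
  exfalso.
  set r := (Num.truncn (Order.max r1 0)).+1.
  have hr : r1 < r%:R.
    have := truncnS_gt (Order.max r1 0); rewrite -/r => h.
    by apply: le_lt_trans h; rewrite le_max lexx.
  have hz : `|(r%:Z)%:~R| <= rho * r%:R :> R.
    rewrite (_ : (r%:Z)%:~R = r%:R :> R) // normr_nat.
    have := ler0n R r; nra.
  have [a [b [_ _ hE]]] := hr1 r hr r%:Z hz.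
  move: hE; rewrite /Xrz (@Eexp_none _ _ _ P xi); first discriminate.
  move=> s; apply/negP => /eqP e; have := last_fst s (1, 1); rewrite e /= subrr.
  by [].
have [c [th0 [r0L [c0 th00 r00 hLT']]]] := hLT (1 - rho) (ltac:(lra)).
have [K [K0 hK]] := @expbound R alpha c a0 c0.
set eps := g2 / 2.
have e0 : 0 < eps by rewrite /eps; lra.
set th := Order.max th0 1 + 1 + 2 * K / eps.
have hKe : 0 <= 2 * K / eps by apply: divr_ge0; lra.
have hmx1 : 1 <= Order.max th0 1 by rewrite le_max lexx orbT.
have hmx0 : th0 <= Order.max th0 1 by rewrite le_max lexx.
have hth1 : 1 < th by rewrite /th; lra.
have hthth : th0 < th by rewrite /th; lra.
have hS : K / (th - 1) <= eps / 2.
  rewrite ler_pdivrMr; last lra.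
  have e2 : eps * (2 * K / eps) = 2 * K by field; rewrite gt_eqF.
  have : 0 <= eps * Order.max th0 1 by apply: mulr_ge0; lra.
  rewrite /th; nra.
exists (g2 / 2), (eps / (2 * (eps + th + 1))), (Order.max (Order.max r1 r0L) 1).
split; first lra.
  by apply: divr_gt0 => //; lra.
move=> r hr z hz.
move: hr; rewrite !gt_max => /andP[/andP[hr1' hrL] hr1''].
have [a [b [ha hb hE]]] := hr1 r hr1' z hz.
move: ha hb => /andP[ha1 ha2] /andP[hb1 hb2].
set X := Xrz xi r z in hE *.
set m := mu * r%:R - G * z%:~R ^+ 2 / r%:R + a + b in hE *.
have hXf := @Eexp_fin _ _ _ P xi _ _ _ hE.
set f := fun w => fine (X w).
have mX : measurable_fun setT X by exact: LPP_meas.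
have hXf' : forall w, X w = (f w)%:E by exact: hXf.
have mf : measurable_fun setT f.
  apply/measurable_EFinP; rewrite (_ : EFin \o f = X) //.
  by apply/funext => w /=; rewrite -hXf'.
have hi : (\int[P]_w (f w)%:E = m%:E)%E.
  by rewrite -hE /Eexp; apply: eq_integral => w _; rewrite hXf'.
set s := r%:R `^ 3^-1 in hb1 hb2 *.
have s0 : 0 < s by apply: powR_gt0; lra.
have hser : (\sum_(k <oo) P [set w | (f w < m - (th + k%:R) * s)%R] <= (K / (th - 1))%:E)%E.
  apply: series_bound => //.
  move=> k.
  have hk := ler0n R k.
  have eB : [set w | f w < m - (th + k%:R) * s] =
      [set w | (X w - Eexp P X < (- ((th + k%:R) * s))%:E)%E].
    apply/seteqP; split => w /=; rewrite hXf' hE -EFinB lte_fin => h; lra.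
  rewrite eB; apply: le_trans (hLT' r hrL (th + k%:R) _ z _) _.
  - lra.
  - by rewrite (_ : 1 - (1 - rho) = rho) //; ring.
  by rewrite lee_fin; apply: hK; lra.
have hcore := @core _ _ _ P f m s eps th (K / (th - 1)) mf hi s0 e0 (ltac:(lra)) hS hser.
apply: le_trans hcore _.
rewrite (_ : [set w | (X w < _)%E] =
   [set w | f w < mu * r%:R - G * z%:~R ^+ 2 / r%:R - g2 / 2 * s]); last first.
  by apply/seteqP; split => w /=; rewrite hXf' lte_fin.
apply: le_measure; rewrite ?inE; try exact: meas_lt.
move=> w /= h.
have : m + eps * s <= mu * r%:R - G * z%:~R ^+ 2 / r%:R - g2 / 2 * s.
  by rewrite /m /eps; lra.
lra.
Qed.
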